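(* Let $G$ be a finite group and $H$ a normal subgroup of $G$. Suppose that $|H|$ and $|G/H|$ are odd and that both $H$ and the quotient group $G/H$ are symmetric harmonious. Then $G$ is symmetric harmonious.
   Context: Let $G$ be a finite group of order $\ell$ with identity $1_G$. A harmonious sequence in $G$ is an ordering $g_0,g_1,\ldots,g_{\ell-1}$ of all the elements of $G$ such that the consecutive products $g_0g_1, g_1g_2, \ldots, g_{\ell-2}g_{\ell-1}, g_{\ell-1}g_0$ are also all the elements of $G$, each appearing exactly once. $G$ is called symmetric harmonious if it admits a harmonious sequence $g_0,\ldots,g_{\ell-1}$ that additionally satisfies $g_i g_{\ell-i}=1_G$ for all $1\le i\le \ell-1$. *)

(* Defs.v *)
From mathcomp Require Import all_boot all_fingroup.
Set Implicit Arguments. Unset Strict Implicit. Unset Printing Implicit Defensive.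
Local Open Scope group_scope.

Definition harmonious_seq (gT : finGroupType) (G : {set gT}) (s : seq gT) :=
  let l := size s in
  perm_eq s (enum G) /\
  perm_eq [seq nth 1 s i * nth 1 s ((i.+1) %% l) | i <- iota 0 l] (enum G).

Definition symmetric_harmonious (gT : finGroupType) (G : {set gT}) :=
  exists s : seq gT, harmonious_seq G s /\
    forall i, 1 <= i < size s -> nth 1 s i * nth 1 s (size s - i) = 1.

(* Main.v *)
Require Import Defs.
From mathcomp Require Import all_boot all_fingroup.
From mathcomp Require Import all_solvable zify.
Set Implicit Arguments. Unset Strict Implicit. Unset Printing Implicit Defensive.
Local Open Scope group_scope.

Lemma sqr_inj (T : finGroupType) (A : {group T}) x y :
  odd #|A| -> x \in A -> y \in A -> x * x = y * y -> x = y.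
Proof.
move=> oA xA yA e.
have key z : z \in A -> z = (z * z) ^+ (#|A|./2.+1).
  move=> zA; rewrite -expg2 -expgM.
  have -> : (2 * (#|A|./2).+1 = #|A|.+1)%N.
    by move: (odd_double_half #|A|); rewrite oA -muln2 /=; lia.
  by rewrite expgSr expg_cardG // mul1g.
by rewrite (key x xA) (key y yA) e.
Qed.

Lemma sh_size (T : finGroupType) (A : {set T}) s : harmonious_seq A s -> size s = #|A|.
Proof. by case=> /perm_size -> _; rewrite cardE. Qed.

Lemma sh_mem (T : finGroupType) (A : {set T}) s i : harmonious_seq A s -> i < size s -> nth 1 s i \in A.
Proof. by case=> /perm_mem pm _ lt; rewrite -mem_enum -pm mem_nth. Qed.

Lemma sh_inj (T : finGroupType) (A : {set T}) s i j : harmonious_seq A s -> i < size s -> j < size s ->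
  nth 1 s i = nth 1 s j -> i = j.
Proof.
case=> pm _ li lj e; apply/eqP; rewrite -(nth_uniq 1 li lj); first by rewrite e.
by rewrite (perm_uniq pm) enum_uniq.
Qed.

Lemma sh_pinj (T : finGroupType) (A : {set T}) s i j : harmonious_seq A s -> i < size s -> j < size s ->
  nth 1 s i * nth 1 s (i.+1 %% size s) = nth 1 s j * nth 1 s (j.+1 %% size s) -> i = j.
Proof.
case=> _ pm li lj e; apply/eqP.
have u := perm_uniq pm; rewrite enum_uniq in u.
rewrite -(nth_uniq 1 _ _ u) ?size_map ?size_iota //.
by rewrite !(nth_map 0) ?size_iota // !nth_iota // e.
Qed.

Lemma sh_one (T : finGroupType) (A : {group T}) s : odd #|A| -> harmonious_seq A s ->
  (forall i, 1 <= i < size s -> nth 1 s i * nth 1 s (size s - i) = 1) -> nth 1 s 0 = 1.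
Proof.
move=> oA hs sym.
have sz := sh_size hs.
have : (1 : T) \in s by case: hs => /perm_mem -> _; rewrite mem_enum group1.
move=> in1; set i := index 1 s.
have li : i < size s by rewrite index_mem.
have ni : nth 1 s i = 1 by rewrite nth_index.
case: (posnP i) => [i0|ip]; first by rewrite -i0.
have := sym i; rewrite ip li ni mul1g => /(_ isT) ni2.
have : size s - i = i by apply: sh_inj hs _ _ _; rewrite ?ni ?ni2 // ltn_subrL ip; case: (size s) li.
move=> e2; move: oA; rewrite -sz; lia.
Qed.
Definition gfun (gT : finGroupType) (h P : nat -> gT) (m n r : nat) (p : nat) : gT :=
  let j := p %% m in let q := p %/ m in
  if j <= r then (P j.-1)^-1 * h q * P j
  else (P (m - j))^-1 * h (q.+1 %% n) * P (m - j).-1.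

Lemma gE (gT : finGroupType) (h P : nat -> gT) m n r j q : j < m ->
  gfun h P m n r (j + m * q) =
  if j <= r then (P j.-1)^-1 * h q * P j
  else (P (m - j))^-1 * h (q.+1 %% n) * P (m - j).-1.
Proof.
move=> jm; rewrite /gfun.
have m0 : 0 < m by case: m jm.
have -> : (j + m * q) %% m = j by rewrite addnC mulnC modnMDl modn_small.
by rewrite addnC mulnC divnMDl // divn_small // addn0.
Qed.

Lemma gnext (gT : finGroupType) (h P : nat -> gT) m n r j q : m = r.*2.+1 -> P 0 = 1 ->
  j < m -> q < n ->
  gfun h P m n r ((j + m * q).+1 %% (m * n)) =
  if j < r then (P j)^-1 * h q * P j.+1
  else (P (m - j.+1))^-1 * h (q.+1 %% n) * P (m - j.+1).-1.
Proof.
move=> em P0 jm qn.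
have [j1|j1] := ltnP j.+1 m.
  rewrite modn_small; last first.
    have : m * q.+1 <= m * n by rewrite leq_mul2l qn orbT.
    rewrite mulnS; lia.
  by rewrite -addSn gE.
have ej : j = m.-1 by lia.
have -> : (j < r) = false by apply/negbTE; rewrite -leqNgt; lia.
have -> : (m - j.+1 = 0)%N by lia.
have -> : ((j + m * q).+1 = m * q.+1)%N by rewrite ej mulnS; lia.
have m0 : 0 < m by lia.
rewrite -muln_modr -[(m * _)%N]add0n gE // leq0n /=.

Qed.

Lemma cosA (gT : finGroupType) (H : {group gT}) a b x :
  a \in 'N(H) -> b \in 'N(H) -> x \in H ->
  coset H (a^-1 * x * b) = (coset H a)^-1 * coset H b.
Proof.
move=> aN bN xH; have xN : x \in 'N(H) by apply: (subsetP (normG H)).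
rewrite !morphM ?groupM ?groupV // morphV //.
by rewrite [coset_morphism H x](coset_id xH) mulg1.
Qed.

Lemma succ_mod n z : z < n -> z.+1 %% n = if z.+1 == n then 0 else z.+1.
Proof.
move=> zn; case: eqP => [->|ne]; first by rewrite modnn.
by rewrite modn_small //; lia.
Qed.

Lemma succ_mod_inj n q q' : q < n -> q' < n -> q.+1 %% n = q'.+1 %% n -> q = q'.
Proof.
move=> qn qn'; rewrite !succ_mod //.
case: eqP; case: eqP; lia.
Qed.

Lemma swap1 (gT : finGroupType) (x y : gT) : x * y = 1 -> y * x = 1.
Proof.
move=> e; have -> : y = x^-1 by rewrite -(mulKg x y) e mulg1.
by rewrite mulVg.
Qed.

Lemma perm_enumG (gT : finGroupType) (G : {set gT}) (s : seq gT) :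
  uniq s -> {subset s <= G} -> size s = #|G| -> perm_eq s (enum G).
Proof.
move=> us sG sz; apply: uniq_perm => //; first exact: enum_uniq.
have h1 : {subset s <= enum G} by move=> x /sG; rewrite mem_enum.
have h2 : size (enum G) <= size s by rewrite -cardE sz.
by have [_] := @uniq_min_size _ s (enum G) us h1 h2.
Qed.

Lemma mid1 (gT : finGroupType) (a b c x y : gT) : a * x * b * (b^-1 * y * c) = a * (x * y) * c.
Proof. by rewrite !mulgA mulgK. Qed.

Lemma canc (gT : finGroupType) (a b x y : gT) : a * x * b = a * y * b -> x = y.
Proof. by move/mulIg/mulgI. Qed.

Lemma inv_of (gT : finGroupType) (x y : gT) : x * y = 1 -> x^-1 = y.
Proof. by move=> e; rewrite -(mulKg x y) e mulg1. Qed.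

Lemma core (gT : finGroupType) (G H : {group gT}) (h P : nat -> gT) (k : nat -> coset_of H) m n r :
  H \subset G -> G \subset 'N(H) -> odd #|H| -> n = #|H| -> m = r.*2.+1 -> #|G| = (m * n)%N ->
  (forall q, q < n -> h q \in H) ->
  (forall q q', q < n -> q' < n -> h q = h q' -> q = q') ->
  (forall q q', q < n -> q' < n -> h q * h (q.+1 %% n) = h q' * h (q'.+1 %% n) -> q = q') ->
  (forall q, q < n -> h q * h ((n - q) %% n) = 1) ->
  (forall j j', j < m -> j' < m -> k j = k j' -> j = j') ->
  (forall j j', j < m -> j' < m -> k j * k (j.+1 %% m) = k j' * k (j'.+1 %% m) -> j = j') ->
  (forall j, 0 < j < m -> k j * k (m - j) = 1) -> k 0 = 1 ->
  (forall j, P j \in G) -> P 0 = 1 ->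
  (forall j, 0 < j <= r -> coset H (P j) = coset H (P j.-1) * k j) ->
  symmetric_harmonious G.
Proof.
move=> sHG nGH oH en em cG hH hinj hpinj hsym kinj kpinj ksym k0 PG P0 Pc.
set N := (m * n)%N.
set g := gfun h P m n r.
have m0 : 0 < m by rewrite em.
have n0 : 0 < n by rewrite en cardG_gt0.
have N0 : 0 < N by rewrite muln_gt0 m0 n0.
have dec : forall p, p < N -> exists2 j, j < m & exists2 q, q < n & p = (j + m * q)%N.
  move=> p pN; exists (p %% m); first exact: ltn_pmod.
  exists (p %/ m); first by rewrite ltn_divLR // mulnC.
  by rewrite {1}(divn_eq p m) addnC mulnC.
have PN j : P j \in 'N(H) by apply: (subsetP nGH _ (PG j)).
have hG q : q < n -> h q \in G by move=> qn; apply: (subsetP sHG); apply: hH.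
have hm q : h (q.+1 %% n) \in H by apply: hH; apply: ltn_pmod.
have gG : forall j q, j < m -> q < n -> g (j + m * q)%N \in G.
  move=> j q jm qn; rewrite /g gE //; case: ifP => _;
  by rewrite !groupM ?groupV ?PG ?hG ?ltn_pmod.
have gnG : forall j q, j < m -> q < n -> g ((j + m * q).+1 %% N) \in G.
  move=> j q jm qn; rewrite /g /N gnext //; case: ifP => _;
  by rewrite !groupM ?groupV ?PG ?hG ?ltn_pmod.
have kinv : forall i, i <= r -> (coset H (P i.-1))^-1 * coset H (P i) = k i.
  move=> [|i] ir /=; first by rewrite P0 morph1 invg1 mulg1 k0.
  by rewrite (Pc i.+1) //= mulgA mulVg mul1g.
have kinv' : forall i, i <= r -> (coset H (P i))^-1 * coset H (P i.-1) = (k i)^-1.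
  by move=> i ir; rewrite -kinv // invMg invgK.
have kneg : forall i, 0 < i < m -> (k i)^-1 = k (m - i).
  by move=> i im; apply: inv_of; apply: ksym.
have gc : forall j q, j < m -> q < n -> coset H (g (j + m * q)%N) = k j.
  move=> j q jm qn; rewrite /g gE //; case: ifP => jr.
    by rewrite cosA ?hH // kinv.
  move/negbT: jr; rewrite -ltnNge => jr.
  rewrite cosA ?hm // kinv' ?kneg ?subKn //; lia.
have gnc : forall j q, j < m -> q < n -> coset H (g ((j + m * q).+1 %% N)) = k (j.+1 %% m).
  move=> j q jm qn; rewrite /g /N gnext //; case: ifP => jr.
    rewrite cosA ?hH // modn_small; last by lia.
    by rewrite -(kinv j.+1).

  move/negbT: jr; rewrite -leqNgt => jr.
  rewrite cosA ?hm // kinv'; last by lia.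
  case: (ltnP j.+1 m) => j1.
    rewrite kneg ?subKn ?modn_small //; lia.
  have -> : (m - j.+1 = 0)%N by lia.
  have -> : j.+1 = m by lia.
  by rewrite modnn k0 invg1.
have ginj : forall j q q', j < m -> q < n -> q' < n -> g (j + m * q)%N = g (j + m * q')%N -> q = q'.
  move=> j q q' jm qn qn'; rewrite /g !gE //; case: ifP => _ /canc.
    by apply: hinj.
  by move/hinj; rewrite !ltn_pmod // => /(_ isT isT); apply: succ_mod_inj.
set pr := fun p => g p * g (p.+1 %% N).
have prc : forall j q, j < m -> q < n -> coset H (pr (j + m * q)%N) = k j * k (j.+1 %% m).
  move=> j q jm qn; have sN := subsetP nGH.
  have cM x y : x \in G -> y \in G -> coset H (x * y) = coset H x * coset H y.
    by move=> xG yG; rewrite morphM // sN.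
  by rewrite /pr cM ?gG ?gnG // gc // gnc.
have prinj : forall j q q', j < m -> q < n -> q' < n -> pr (j + m * q)%N = pr (j + m * q')%N -> q = q'.
  move=> j q q' jm qn qn'; rewrite /pr /g !gE // !gnext //.
  case: (ltngtP j r) => jr.
  - rewrite !mid1 => /canc.
    by move/(sqr_inj oH (hH _ qn) (hH _ qn')); apply: hinj.
  - rewrite subnS !mid1 => /canc.
    move/(sqr_inj oH (hm q) (hm q'))/hinj; rewrite !ltn_pmod // => /(_ isT isT).
    exact: succ_mod_inj.
  - rewrite (_ : (m - j.+1 = j)%N); last by lia.
    by rewrite !mid1 => /canc; apply: hpinj.
have S1 : forall j q, 0 < j <= r -> q < n ->
    g (j + m * q)%N * g ((m - j) + m * (n.-1 - q))%N = 1.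
  move=> j q jr qn; have jm : j < m by lia.
  rewrite /g !gE; try lia.
  rewrite (_ : (j <= r) = true); last by lia.
  rewrite (_ : (m - j <= r) = false); last by lia.
  rewrite subKn; last by lia.
  rewrite (_ : (n.-1 - q).+1 = n - q)%N; last by lia.
  by rewrite mid1 hsym // mulg1 mulVg.
have idx : forall j q, 0 < j < m -> q < n -> (N - (j + m * q) = (m - j) + m * (n.-1 - q))%N.
  move=> j q jm qn; rewrite /N.
  have -> : n = (n.-1 - q + q).+1 by lia.
  rewrite mulnS mulnDr; lia.
have sym : forall p, 0 < p < N -> g p * g (N - p)%N = 1.
  move=> p /andP [p0 pN]; have [j jm [q qn ep]] := dec p pN.
  case: (posnP j) => [j0|jp].
    rewrite ep j0 /= -{2}[(m * q)%N]add0n.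
    have q0 : 0 < q by move: p0; rewrite ep j0 /=; case: q {ep qn} => //; rewrite muln0.
    have -> : (N - m * q = 0 + m * (n - q))%N by rewrite /N mulnBr add0n.
    rewrite /g !gE // /= P0 invg1 mul1g mulg1 mul1g mulg1.
    by have := hsym q qn; rewrite modn_small //; lia.
  case: (leqP j r) => jr.
    by rewrite ep idx ?jp //; apply: S1 => //; rewrite jp.
  rewrite ep idx ?jp //; apply: swap1.
  have := S1 (m - j)%N (n.-1 - q)%N.
  rewrite subKn; last by lia.
  rewrite (_ : (n.-1 - (n.-1 - q) = q)%N); last by lia.
  apply; lia.
have gGp : forall p, p < N -> g p \in G.
  by move=> p pN; have [j jm [q qn ->]] := dec p pN; apply: gG.
have gpinj : forall p p', p < N -> p' < N -> g p = g p' -> p = p'.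
  move=> p p' pN pN'; have [j jm [q qn ->]] := dec p pN; have [j' jm' [q' qn' ->]] := dec p' pN'.
  move=> e; have ejj : j = j' by apply: kinj => //; rewrite -(gc j q) // -(gc j' q') // e.
  by subst j'; rewrite (ginj j q q').
have prinj' : forall p p', p < N -> p' < N -> pr p = pr p' -> p = p'.
  move=> p p' pN pN'; have [j jm [q qn ->]] := dec p pN; have [j' jm' [q' qn' ->]] := dec p' pN'.
  move=> e; have ejj : j = j' by apply: kpinj => //; rewrite -(prc j q) // -(prc j' q') // e.
  by subst j'; rewrite (prinj j q q').
have sz : size (mkseq g N) = N by rewrite size_mkseq.
exists (mkseq g N); split; last first.
  move=> i; rewrite sz => /andP [i0 iN].
  rewrite !nth_mkseq //; last by lia.
  by apply: sym; rewrite i0.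
split.
  apply: perm_enumG; rewrite ?sz ?cG //.
    by rewrite map_inj_in_uniq ?iota_uniq // => x y; rewrite !mem_iota /= !add0n; apply: gpinj.
  by move=> x /mapP [i]; rewrite mem_iota add0n => /andP [_ iN] ->; apply: gGp.
rewrite sz (_ : map _ _ = map pr (iota 0 N)); last first.
  apply/eq_in_map => i; rewrite mem_iota add0n /= => iN.
  by rewrite /pr !nth_mkseq // ltn_pmod.
apply: perm_enumG; rewrite ?size_map ?size_iota ?cG //.
  by rewrite map_inj_in_uniq ?iota_uniq // => x y; rewrite !mem_iota /= !add0n; apply: prinj'.
move=> x /mapP [i]; rewrite mem_iota add0n => /andP [_ iN] ->.
by rewrite /pr groupM ?gGp // ltn_pmod.
Qed.

Fixpoint Pfun (gT : finGroupType) (t : nat -> gT) (j : nat) : gT :=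
  if j is j'.+1 then Pfun t j' * t j else 1.

Lemma hsym_mod (T : finGroupType) (A : {group T}) s : odd #|A| -> harmonious_seq A s ->
  (forall i, 1 <= i < size s -> nth 1 s i * nth 1 s (size s - i) = 1) ->
  forall q, q < size s -> nth 1 s q * nth 1 s ((size s - q) %% size s) = 1.
Proof.
move=> oA hs sym q qn; case: (posnP q) => [->|qp].
  by rewrite subn0 modnn (sh_one oA hs sym) mulg1.
by rewrite modn_small ?sym ?qp //; lia.
Qed.

Theorem lemma1 (gT : finGroupType) (G H : {group gT}) :
  H <| G -> odd #|H| -> odd #|G / H| ->
  symmetric_harmonious H -> symmetric_harmonious (G / H) ->
  symmetric_harmonious G.
Proof.
move=> /andP [sHG nGH] oH oK [hs [hh hsy]] [ks [kh ksy]].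
have szh := sh_size hh; have szk := sh_size kh.
set n := #|H|; set m := #|G / H|.
pose h q := nth 1 hs q; pose k j := nth 1 ks j.
pose t j := odflt 1 [pick x in G | coset H x == k j].
have tG j : t j \in G by rewrite /t; case: pickP => [x /andP [] |] //= _; exact: group1.
have tc j : j < m -> coset H (t j) = k j.
  move=> jm; have : k j \in G / H by apply: sh_mem kh _; rewrite szk.
  case/morphimP => x xN xG ekj; rewrite /t; case: pickP => [y /andP [_ /eqP ->] //|].
  by move/(_ x); rewrite xG ekj /= eqxx.
pose P := Pfun t.
have PG j : P j \in G by elim: j => [|j IH] //=; rewrite ?group1 ?groupM.
have em : m = (m./2).*2.+1 by move: (odd_double_half m); rewrite oK.
apply: (@core gT G H h P k m n m./2) => //.
- by rewrite /m /n card_quotient // -(Lagrange sHG) mulnC.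
- by move=> q qn; apply: sh_mem hh _; rewrite szh.
- by move=> q q' qn qn'; apply: sh_inj hh _ _; rewrite szh.
- by move=> q q' qn qn'; rewrite /h /n -szh; apply: sh_pinj hh _ _; rewrite szh.
- by move=> q qn; rewrite /h /n -szh; apply: (hsym_mod oH hh hsy); rewrite szh.
- by move=> j j' jm jm'; apply: sh_inj kh _ _; rewrite szk.
- by move=> j j' jm jm'; rewrite /k /m -szk; apply: sh_pinj kh _ _; rewrite szk.
- by move=> j jm; rewrite /k /m -szk; apply: ksy; rewrite szk.
- by apply: (sh_one oK kh ksy).
- move=> [|j] // /andP [_ jr] /=.
  have cM x y : x \in G -> y \in G -> coset H (x * y) = coset H x * coset H y.
    by move=> xG yG; rewrite morphM // (subsetP nGH).
  rewrite cM // tc //; lia.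
Qed.
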